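(* Let $\mathcal{R}=(\mathcal{W},\mathcal{R}_1,\mathcal{R}_2)$ with $\mathcal{W}=\{1,\dots,m\}$, let $\mathcal{S}$, $L$, $K_1,\dots,K_4$ be constructed from $\mathcal{R}$ as below, and let $\mathcal{T}$ be a solution to the $\mathcal{S}$-cyclic triomino problem. Fix $s\in\mathbb{Z}^2$. If $p(s,i)$ holds for some $1\le i\le 4$, then $p(s,i)$ holds for every $1\le i\le 4$.
   Context: A domino set is $\mathcal{R}=(\mathcal{W},\mathcal{R}_1,\mathcal{R}_2)$ with $\mathcal{W}$ non-empty finite and $\mathcal{R}_1,\mathcal{R}_2\subset\mathcal{W}^2$; here $\mathcal{W}=\{1,\dots,m\}$. Let $u_1=(1,0),u_2=(0,1),u_3=(-1,0),u_4=(0,-1)$, indices mod 4. Fix $n\ge 2m+1$ and regard integers as elements of $\mathbb{Z}_n$. Let $L=\{(w,0,0): w\in\mathcal{W}\}$, $K_1=L\cup\{(0,b,a):(a,b)\in\mathcal{R}_1\}$, $K_2=L\cup\{(0,a,b):(a,b)\in\mathcal{R}_2\}$, $K_3=L\cup\{(0,a,b):(a,b)\in\mathcal{R}_1\}$, $K_4=L\cup\{(0,b,a):(a,b)\in\mathcal{R}_2\}$, with $K_{i+4}=K_i$. Let $\mathcal{V}=\mathbb{Z}_n$, $\mathcal{S}_i=\{(a+k,b+k,c+k):(a,b,c)\in K_i, k\in\mathcal{V}\}$, $\mathcal{S}_{i+4}=\mathcal{S}_i$, and $\mathcal{S}=(\mathcal{V},\mathcal{S}_1,\dots,\mathcal{S}_4)$.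 A solution to the $\mathcal{S}$-cyclic triomino problem is a function $\mathcal{T}:\mathbb{Z}^2\to\mathcal{V}$ with $(\mathcal{T}(s),\mathcal{T}(s+u_i),\mathcal{T}(s+u_{i+1}))\in\mathcal{S}_i$ for all $s$ and $1\le i\le 4$. For $s\in\mathbb{Z}^2$, $i\in\mathbb{Z}$, $p(s,i)$ is the statement $(\mathcal{T}(s),\mathcal{T}(s+u_i),\mathcal{T}(s+u_{i+1}))\in L$ and $q(s,i)$ is the statement $(\mathcal{T}(s),\mathcal{T}(s+u_i),\mathcal{T}(s+u_{i+1}))\in K_i\setminus L$. *)

(* Defs.v *)
From mathcomp Require Import all_boot all_algebra.
Set Implicit Arguments. Unset Strict Implicit. Unset Printing Implicit Defensive.
Import GRing.Theory.
Local Open Scope ring_scope.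

Definition pt := (int * int)%type.
Definition addp (s t : pt) : pt := (s.1 + t.1, s.2 + t.2).

Definition u (i : nat) : pt :=
  match (i %% 4)%N with
  | 1 => (1, 0)
  | 2 => (0, 1)
  | 3 => (-1, 0)
  | _ => (0, -1)
  end.

Definition triple3 (n : nat) := ('Z_n * 'Z_n * 'Z_n)%type.

Definition inL (n m : nat) (t : triple3 n) : Prop :=
  exists w : nat, (1 <= w <= m)%N /\ t = (w%:R, 0, 0).

Definition inK (n m : nat) (R1 R2 : rel nat) (i : nat) (t : triple3 n) : Prop :=
  inL m t \/
  exists a b : nat,
    match (i %% 4)%N with
    | 1 => R1 a b /\ t = (0, b%:R, a%:R)
    | 2 => R2 a b /\ t = (0, a%:R, b%:R)
    | 3 => R1 a b /\ t = (0, a%:R, b%:R)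
    | _ => R2 a b /\ t = (0, b%:R, a%:R)
    end.

Definition inS (n m : nat) (R1 R2 : rel nat) (i : nat) (t : triple3 n) : Prop :=
  exists (k : 'Z_n) (x : triple3 n),
    inK m R1 R2 i x /\ t = (x.1.1 + k, x.1.2 + k, x.2 + k).

Definition tri (n : nat) (T : pt -> 'Z_n) (s : pt) (i : nat) : triple3 n :=
  (T s, T (addp s (u i)), T (addp s (u i.+1))).

Definition is_solution (n m : nat) (R1 R2 : rel nat) (T : pt -> 'Z_n) : Prop :=
  forall (s : pt) (i : nat), (1 <= i <= 4)%N -> inS m R1 R2 i (tri T s i).

Definition p (n m : nat) (T : pt -> 'Z_n) (s : pt) (i : nat) : Prop :=
  inL m (tri T s i).

(* Main.v *)
Require Import Defs.
From mathcomp Require Import all_boot all_algebra.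
From mathcomp Require Import zify.
Import GRing.Theory.
Local Open Scope ring_scope.

Lemma sum_ne0 (n' m c w : nat) : (2 * m + 1 <= n'.+2)%N ->
  (1 <= c <= m)%N -> (1 <= w <= m)%N ->
  (c%:R + w%:R : 'Z_(n'.+2)) != 0.
Proof.
move=> hn /andP[c1 cm] /andP[w1 wm].
rewrite -natrD; apply/eqP => /(congr1 val) /=.
rewrite Zp_nat /= modn_small /=.
- lia.
- rewrite /Zp_trunc /=; lia.
Qed.

Lemma contra (n' m c w : nat) (k : 'Z_(n'.+2)) : (2 * m + 1 <= n'.+2)%N ->
  (1 <= c <= m)%N -> (1 <= w <= m)%N ->
  w%:R = 0 + k -> 0 = c%:R + k -> False.
Proof.
move=> hn hc hw e1 e2; have := @sum_ne0 n' m c w hn hc hw.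
by rewrite e2 e1 add0r eqxx.
Qed.

Lemma step (m n' : nat) (R1 R2 : rel nat)
  (hn : (2 * m + 1 <= n'.+2)%N)
  (hR1 : forall a b, R1 a b -> (1 <= a <= m)%N /\ (1 <= b <= m)%N)
  (hR2 : forall a b, R2 a b -> (1 <= a <= m)%N /\ (1 <= b <= m)%N)
  (T : pt -> 'Z_(n'.+2)) (s : pt) (i : nat) :
  p m T s i -> inS m R1 R2 i.+1 (tri T s i.+1) -> p m T s i.+1.
Proof.
rewrite /p /inL /tri => -[w [hw [e1 e2 e3]]] [k [x [hK]]].
rewrite e1 e3 => E.
have /= f1 := congr1 (fun t => t.1.1) E.
have /= f2 := congr1 (fun t => t.1.2) E.
have /= f3 := congr1 (fun t => t.2) E.
clear E.
exists w; split => //; congr (_, _, _) => //.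
case: hK => [[w' [hw' ex]]|[a [b]]].
  by move: f2 f3; rewrite ex /= => h1 ->; rewrite -h1.
case: (i.+1 %% 4)%N => [|[|[|[|?]]]] [hr ex];
  (have [ha hb] := hR1 _ _ hr) || (have [ha hb] := hR2 _ _ hr);
  move: f1 f2; rewrite ex /= => f1 f2; exfalso;
  first [ exact: (@contra n' m a w k hn ha hw f1 f2) | exact: (@contra n' m b w k hn hb hw f1 f2) ].
Qed.

Theorem lemma3p2 (m n : nat) (R1 R2 : rel nat)
  (hm : (1 <= m)%N) (hn : (2 * m + 1 <= n)%N)
  (hR1 : forall a b, R1 a b -> (1 <= a <= m)%N /\ (1 <= b <= m)%N)
  (hR2 : forall a b, R2 a b -> (1 <= a <= m)%N /\ (1 <= b <= m)%N)
  (T : pt -> 'Z_n) (hT : is_solution m R1 R2 T) (s : pt) :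
  (exists i, (1 <= i <= 4)%N /\ p m T s i) ->
  forall i, (1 <= i <= 4)%N -> p m T s i.
Proof.
case: n hn T hT => [|[|n']] hn T hT.
- exfalso; lia.
- exfalso; lia.
have S i : (1 <= i.+1 <= 4)%N -> p m T s i -> p m T s i.+1.
  move=> hi hp; exact: (@step m n' R1 R2 hn hR1 hR2 T s i hp (hT s _ hi)).
have S4 : p m T s 4 -> p m T s 1.
  move=> hp; exact: (@step m n' R1 R2 hn hR1 hR2 T s 4 hp (hT s 1 isT)).
have S1 := S 1%N isT; have S2 := S 2%N isT; have S3 := S 3%N isT.
move=> [i0 [hi0 hp]] j hj.
case: i0 hi0 hp => [|[|[|[|[|?]]]]] //= _ hp;
case: j hj => [|[|[|[|[|?]]]]] //= _; tauto.
Qed.
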